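(* Let $f:(0,\infty)\to\mathbb{R}$ be real analytic and not identically zero. Let $\mathcal I=\{x\in(0,\infty):f(x)=0\}$. Assume that: (1) for every sequence $x_j\in(0,\infty)$ with $x_j\to0$ or $x_j\to\infty$ and such that $\mathrm{dist}(x_j,\mathcal I)\to0$, we have $\kappa(f,x_j)\to\infty$; (2) both as $x\to0$ and as $x\to\infty$ we have $\limsup|H(f,x)|\leq C$ for some constant $C>0$, where $H(f,x)=\frac{x^2f(x)f''(x)}{f(x)^2+x^2f'(x)^2}$. The part of this hypothesis concerning $x\to0$ is automatically satisfied if $f$ admits an analytic extension to $(-\epsilon,\infty)$ for some $\epsilon>0$. Then $f$ is amenable.
   Context: Relative distance on $\mathbb{R}$: $\mathrm{dist}(x,y)=0$ if $x=y=0$, $\mathrm{dist}(x,y)=|\log(y/x)|$ if $xy>0$, and $\mathrm{dist}(x,y)=\infty$ otherwise; for a set $S$, $\mathrm{dist}(x,S)=\inf_{s\in S}\mathrm{dist}(x,s)$. For a real analytic function $f$ on an open set $\Omega\subseteq\mathbb{R}$, not identically zero, the condition number is $\kappa(f,x)=0$ if $x=0$, $\kappa(f,x)=\infty$ if $x\neq0$ and $f(x)=0$, and $\kappa(f,x)=|x|\,|f'(x)|/|f(x)|$ otherwise; set $\mu(f,x)=1+\kappa(f,x)$. The function $f:\Omega\to\mathbb{R}$ is called amenable if there is a constant $C>0$ such that for every $x\in\Omega$ with $\kappa(f,x)<\infty$, the set $B_x=\{y\in\mathbb{R}:\mathrm{dist}(y,x)<1/(C\mu(f,x))\}$ is contained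 in $\Omega$, and $\mu(f,y)\leq C\mu(f,x)$ for all $y\in B_x$. *)

(* Defs.v *)
From Stdlib Require Import Reals Lra.
From Coquelicot Require Import Coquelicot.
Open Scope R_scope.

Definition reldist (x y : R) : Rbar :=
  if Req_EM_T x 0 then (if Req_EM_T y 0 then Finite 0
                        else p_infty)
  else if Rlt_dec 0 (x * y) then Finite (Rabs (ln (y / x)))
  else p_infty.

Definition reldist_set (x : R) (S : R -> Prop) : Rbar :=
  Rbar_glb (fun d => exists s, S s /\ d = reldist x s).

Definition real_analytic_on (Omega : R -> Prop) (f : R -> R) : Prop :=
  forall x0, Omega x0 ->
    exists (a : nat -> R) (r : R), 0 < r /\
      forall x, Rabs (x - x0) < r -> Omega x /\ is_pseries a (x - x0) (f x).

Definition kappa (f : R -> R) (x : R) : Rbar :=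
  if Req_EM_T x 0 then Finite 0
  else if Req_EM_T (f x) 0 then p_infty
  else Finite (Rabs x * Rabs (Derive f x) / Rabs (f x)).

Definition mu (f : R -> R) (x : R) : Rbar := Rbar_plus (Finite 1) (kappa f x).

Definition amenable (Omega : R -> Prop) (f : R -> R) : Prop :=
  exists C : R, 0 < C /\
    forall x, Omega x -> is_finite (kappa f x) ->
      (forall y, Rbar_lt (reldist y x) (Finite (/ (C * real (mu f x)))) -> Omega y) /\
      (forall y, Rbar_lt (reldist y x) (Finite (/ (C * real (mu f x)))) ->
                 Rbar_le (mu f y) (Finite (C * real (mu f x)))).

Definition Rbar_seq_cv (u : nat -> Rbar) (l : Rbar) : Prop :=
  match l with
  | Finite l0 => forall eps, 0 < eps -> exists N, forall n, (N <= n)%nat ->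
                   exists r, u n = Finite r /\ Rabs (r - l0) < eps
  | p_infty => forall M, exists N, forall n, (N <= n)%nat -> Rbar_lt (Finite M) (u n)
  | m_infty => forall M, exists N, forall n, (N <= n)%nat -> Rbar_lt (u n) (Finite M)
  end.

Definition Hfun (f : R -> R) (x : R) : R :=
  x ^ 2 * f x * Derive_n f 2 x / (f x ^ 2 + x ^ 2 * (Derive f x) ^ 2).

Definition pos_half_line (x : R) : Prop := 0 < x.

(* Main.v *)
Require Import Defs.
From Stdlib Require Import Reals Lra Psatz Classical ClassicalEpsilon Arith Wf_nat.
From Coquelicot Require Import Coquelicot.
Open Scope R_scope.


Lemma cont_eps (g : R -> R) (x : R) : continuity_pt g x ->
  forall eps, 0 < eps -> exists d, 0 < d /\ forall y, Rabs (y - x) < d -> Rabs (g y - g x) < eps.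
Proof.
  intros Hc eps Heps. destruct (Hc eps Heps) as [d [Hd Hy]].
  exists d; split; auto. intros y Hyx.
  destruct (Req_dec y x) as [->|Hne].
  - rewrite Rminus_eq_0, Rabs_R0; auto.
  - apply (Hy y). split. split; auto. exact I. unfold R_dist; auto.
Qed.

Lemma ex_derive_cont_eps (g : R -> R) (x : R) : ex_derive g x ->
  forall eps, 0 < eps -> exists d, 0 < d /\ forall y, Rabs (y - x) < d -> Rabs (g y - g x) < eps.
Proof.
  intros H. apply cont_eps. apply continuity_pt_filterlim. exact (@ex_derive_continuous R_AbsRing R_NormedModule g x H).
Qed.

Lemma pseries_radius (a : nat -> R) (r : R) :
  (forall y, Rabs y < r -> ex_pseries a y) ->
  forall y, Rabs y < r -> Rbar_lt (Rabs y) (CV_radius a).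
Proof.
  intros Hex y Hy.
  set (y' := (Rabs y + r) / 2).
  assert (Hy1 : Rabs y < y') by (unfold y'; lra).
  assert (Hy0 : 0 <= y') by (unfold y'; pose proof (Rabs_pos y); lra).
  assert (Hy2 : Rabs y' < r) by (rewrite Rabs_pos_eq; unfold y' in *; lra).
  pose proof (Hex y' Hy2) as He.
  apply ex_series_lim_0 in He.
  apply is_lim_seq_Reals in He.
  apply cv_cvabs in He. rewrite Rabs_R0 in He.
  assert (He' := CV_Cauchy _ (exist _ 0 He)); clear He; rename He' into He. apply cauchy_bound in He.
  destruct He as [M HM].
  assert (Hin : Rbar_le y' (CV_radius a)).
  { destruct (CV_radius_bounded a) as [Hub _]. apply Hub.
    exists M. intros n. apply HM. exists n.
    unfold scal; simpl. unfold mult; simpl.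
    rewrite Rmult_comm. f_equal. }
  eapply Rbar_lt_le_trans; [|exact Hin]. simpl. exact Hy1.
Qed.

Lemma CV_radius_decr_n (a : nat -> R) (n : nat) : CV_radius (PS_decr_n a n) = CV_radius a.
Proof.
  induction n as [|n IH].
  - apply CV_radius_ext. intros k. reflexivity.
  - rewrite <- IH. rewrite <- (CV_radius_decr_1 (PS_decr_n a n)).
    apply CV_radius_ext. intros k. unfold PS_decr_n, PS_decr_1. f_equal. lia.
Qed.


Lemma locally_R (P : R -> Prop) x e : 0 < e -> (forall y, Rabs (y - x) < e -> P y) -> locally x P.
Proof.
  intros He H. exists (mkposreal e He). intros y Hy. apply H. exact Hy.
Qed.

Lemma loc_rep (f : R -> R) (Hana : real_analytic_on pos_half_line f) z (hz : 0 < z) :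
  exists a r, 0 < r /\ (forall x, Rabs (x - z) < r -> 0 < x /\ f x = PSeries a (x - z))
    /\ (forall y, Rabs y < r -> Rbar_lt (Rabs y) (CV_radius a)).
Proof.
  destruct (Hana z hz) as [a [r [Hr H]]].
  exists a, r. split; [exact Hr|]. split.
  - intros x Hx. destruct (H x Hx) as [H1 H2]. split; [exact H1|].
    symmetry. apply is_pseries_unique. exact H2.
  - apply pseries_radius. intros y Hy.
    destruct (H (y + z)) as [_ H2]. { replace (y + z - z) with y by ring. exact Hy. }
    replace (y + z - z) with y in H2 by ring. eexists. exact H2.
Qed.

Lemma is_derive_shift (b : nat -> R) z x : Rbar_lt (Rabs (x - z)) (CV_radius b) ->
  is_derive (fun u => PSeries b (u - z)) x (PSeries (PS_derive b) (x - z)).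
Proof.
  intros Hb.
  assert (H1 : is_derive (fun u : R => u - z) x 1).
  { auto_derive; auto; ring. }
  pose proof (is_derive_comp (PSeries b) (fun u => u - z) x _ _ (is_derive_PSeries b (x - z) Hb) H1) as H.
  replace (PSeries (PS_derive b) (x - z)) with (scal 1 (PSeries (PS_derive b) (x - z))). exact H.
  unfold scal; simpl; unfold mult; simpl; ring.
Qed.

Lemma loc_derivs (f : R -> R) (a : nat -> R) (r z : R) :
  0 < r -> (forall x, Rabs (x - z) < r -> 0 < x /\ f x = PSeries a (x - z)) ->
  (forall y, Rabs y < r -> Rbar_lt (Rabs y) (CV_radius a)) ->
  forall x, Rabs (x - z) < r ->
    Derive f x = PSeries (PS_derive a) (x - z) /\
    Derive_n f 2 x = PSeries (PS_derive (PS_derive a)) (x - z) /\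
    is_derive f x (Derive f x) /\ is_derive (Derive f) x (Derive_n f 2 x).
Proof.
  intros Hr Hf Hcv x Hx.
  assert (Hloc : forall x, Rabs (x - z) < r -> locally x (fun u => PSeries a (u - z) = f u)).
  { intros x0 Hx0. apply (locally_R _ x0 (r - Rabs (x0 - z))). lra.
    intros y Hy. symmetry. apply Hf.
    replace (y - z) with ((y - x0) + (x0 - z)) by ring.
    pose proof (Rabs_triang (y - x0) (x0 - z)). lra. }
  assert (HD : forall x, Rabs (x - z) < r -> Derive f x = PSeries (PS_derive a) (x - z)).
  { intros x0 Hx0. rewrite <- (Derive_ext_loc _ _ _ (Hloc x0 Hx0)).
    apply is_derive_unique. apply is_derive_shift. apply Hcv. exact Hx0. }
  assert (Hloc2 : locally x (fun u => PSeries (PS_derive a) (u - z) = Derive f u)).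
  { apply (locally_R _ x (r - Rabs (x - z))). lra.
    intros y Hy. symmetry. apply HD.
    replace (y - z) with ((y - x) + (x - z)) by ring.
    pose proof (Rabs_triang (y - x) (x - z)). lra. }
  assert (HD2 : Derive_n f 2 x = PSeries (PS_derive (PS_derive a)) (x - z)).
  { change (Derive_n f 2 x) with (Derive (Derive f) x). rewrite <- (Derive_ext_loc _ _ _ Hloc2).
    apply is_derive_unique. apply is_derive_shift. rewrite CV_radius_derive. apply Hcv. exact Hx. }
  split; [apply HD; exact Hx|]. split; [exact HD2|]. split.
  - rewrite (HD x Hx). eapply is_derive_ext_loc. exact (Hloc x Hx).
    apply is_derive_shift. apply Hcv. exact Hx.
  - rewrite HD2. eapply is_derive_ext_loc. exact Hloc2.
    apply is_derive_shift. rewrite CV_radius_derive. apply Hcv. exact Hx.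
Qed.


Lemma ps_head_zero (c : nat -> R) (s e : R) : s <> 0 -> 0 < e ->
  Rbar_lt 0 (CV_radius c) ->
  (forall x, 0 < x < e -> PSeries c (s * x) = 0) -> c 0%nat = 0.
Proof.
  intros Hs He Hcv H.
  destruct (Req_dec (c 0%nat) 0) as [|Hne]; [assumption|exfalso].
  assert (Hc : continuity_pt (PSeries c) 0).
  { apply PSeries_continuity. rewrite Rabs_R0. exact Hcv. }
  destruct (cont_eps _ _ Hc (Rabs (c 0%nat)) (Rabs_pos_lt _ Hne)) as [d [Hd Hdd]].
  assert (Has : 0 < Rabs s) by (apply Rabs_pos_lt; auto).
  set (x := Rmin (e / 2) (d / (2 * Rabs s))).
  assert (Hx0 : 0 < x). { unfold x. apply Rmin_pos. lra. apply Rdiv_lt_0_compat; lra. }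
  assert (Hx1 : x < e). { unfold x. pose proof (Rmin_l (e/2) (d / (2 * Rabs s))). lra. }
  assert (Hx2 : x <= d / (2 * Rabs s)) by apply Rmin_r.
  specialize (Hdd (s * x)).
  rewrite PSeries_0, H in Hdd by lra.
  rewrite Rminus_0_l, Rabs_Ropp in Hdd.
  assert (Hlt : Rabs (s * x - 0) < d).
  { rewrite Rminus_0_r, Rabs_mult, (Rabs_pos_eq x) by lra.
    apply Rmult_le_compat_l with (r := Rabs s) in Hx2; [|lra].
    replace (Rabs s * (d / (2 * Rabs s))) with (d / 2) in Hx2 by (field; lra). lra. }
  specialize (Hdd Hlt). lra.
Qed.

Lemma ps_zero_side (a : nat -> R) (s e : R) : s <> 0 -> 0 < e ->
  Rbar_lt 0 (CV_radius a) ->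
  (forall x, 0 < x < e -> PSeries a (s * x) = 0) -> forall n, a n = 0.
Proof.
  intros Hs He Hcv H.
  assert (Hall : forall j, forall x, 0 < x < e -> PSeries (PS_decr_n a j) (s * x) = 0).
  { induction j as [|j IH].
    - intros x Hx. rewrite <- (H x Hx). apply PSeries_ext. intros k. reflexivity.
    - intros x Hx.
      assert (H0 : PS_decr_n a j 0%nat = 0).
      { apply (ps_head_zero _ s e); auto. rewrite CV_radius_decr_n. exact Hcv. }
      pose proof (PSeries_decr_1_aux (PS_decr_n a j) (s * x) H0) as Hd.
      rewrite (IH x Hx) in Hd.
      assert (Hsx : s * x <> 0) by (apply Rmult_integral_contrapositive; split; lra).
      assert (Hz : PSeries (PS_decr_1 (PS_decr_n a j)) (s * x) = 0).
      { symmetry in Hd. apply Rmult_integral in Hd. destruct Hd as [Hd|Hd]; [|exact Hd].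
        exfalso; apply Hsx; auto. }
      rewrite <- Hz. apply PSeries_ext. intros k. unfold PS_decr_n, PS_decr_1. f_equal. lia. }
  intros n.
  replace (a n) with (PS_decr_n a n 0%nat) by (unfold PS_decr_n; f_equal; lia).
  apply (ps_head_zero _ s e); auto. rewrite CV_radius_decr_n. exact Hcv.
Qed.


Lemma zero_series_zero (a : nat -> R) : (forall n, a n = 0) -> forall x, PSeries a x = 0.
Proof.
  intros H x. rewrite <- (PSeries_const_0 x). apply PSeries_ext. exact H.
Qed.

Lemma nonflat (f : R -> R) (Hana : real_analytic_on pos_half_line f)
  (Hnz : exists x, 0 < x /\ f x <> 0) z (hz : 0 < z) (a : nat -> R) (r : R) :
  0 < r -> (forall x, Rabs (x - z) < r -> 0 < x /\ f x = PSeries a (x - z)) ->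
  exists n, a n <> 0.
Proof.
  intros Hr Hf.
  apply NNPP. intros Hno.
  assert (Ha : forall n, a n = 0).
  { intros n. apply NNPP. intros Hn. apply Hno. exists n. exact Hn. }
  destruct Hnz as [x0 [Hx0 Hfx0]].
  assert (Hz0 : forall x, Rabs (x - z) < r -> f x = 0).
  { intros x Hx. rewrite (proj2 (Hf x Hx)). apply zero_series_zero. exact Ha. }
  assert (Hxz : x0 <> z). { intros ->. apply Hfx0. apply Hz0. rewrite Rminus_eq_0, Rabs_R0. lra. }
  set (s := if Rlt_dec z x0 then 1 else - (1)).
  set (d0 := Rabs (x0 - z)).
  assert (Hs : Rabs s = 1).
  { unfold s. destruct (Rlt_dec z x0); [apply Rabs_R1|]. rewrite Rabs_Ropp. apply Rabs_R1. }
  assert (Hx0e : x0 = z + s * d0).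
  { unfold s, d0. destruct (Rlt_dec z x0).
    - rewrite Rabs_pos_eq by lra. ring.
    - rewrite Rabs_left by lra. ring. }
  assert (Hd0 : 0 < d0). { unfold d0. apply Rabs_pos_lt. lra. }
  assert (Hpos : forall e, 0 <= e <= d0 -> 0 < z + s * e).
  { intros e He. unfold s in *. destruct (Rlt_dec z x0).
    - nra.
    - assert (x0 = z - d0) by (rewrite Hx0e; ring). nra. }
  set (E := fun d => 0 <= d /\ forall e, 0 <= e <= d -> f (z + s * e) = 0).
  assert (HEb : forall d, E d -> d < d0).
  { intros d [Hd HE]. destruct (Rlt_le_dec d d0) as [|Hle]; [assumption|].
    exfalso. apply Hfx0. rewrite Hx0e. apply HE. lra. }
  assert (HEr : E (r / 2)).
  { split. lra. intros e He. apply Hz0.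
    replace (z + s * e - z) with (s * e) by ring. rewrite Rabs_mult, Hs, Rabs_pos_eq; lra. }
  destruct (completeness E) as [D [HDub HDl]].
  { exists d0. intros d Hd. left. apply HEb. exact Hd. }
  { exists (r / 2). exact HEr. }
  assert (HDr : r / 2 <= D) by (apply HDub; exact HEr).
  assert (HDd0 : D <= d0).
  { apply HDl. intros d Hd. left. apply HEb. exact Hd. }
  assert (HbelowD : forall e, 0 <= e < D -> f (z + s * e) = 0).
  { intros e He. apply NNPP. intros Hne.
    assert (Hub : is_upper_bound E e).
    { intros d [Hd HEd]. destruct (Rle_lt_dec d e) as [|Hlt]; [assumption|].
      exfalso. apply Hne. apply HEd. lra. }
    specialize (HDl e Hub). lra. }
  set (T := z + s * D).
  assert (HT : 0 < T) by (apply Hpos; lra).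
  destruct (loc_rep f Hana T HT) as [b [rho [Hrho [Hfb Hcvb]]]].
  assert (Hb0 : forall n, b n = 0).
  { apply (ps_zero_side b (- s) (Rmin rho D)).
    - intros Hc. rewrite <- (Ropp_involutive s), Hc, Ropp_0, Rabs_R0 in Hs. lra.
    - apply Rmin_pos; lra.
    - replace 0 with (Rabs 0) by apply Rabs_R0. apply Hcvb. rewrite Rabs_R0. exact Hrho.
    - intros x Hx.
      assert (Hx1 : x < rho) by (pose proof (Rmin_l rho D); lra).
      assert (Hx2 : x < D) by (pose proof (Rmin_r rho D); lra).
      assert (Hrep : Rabs ((T - s * x) - T) < rho).
      { replace (T - s * x - T) with (- (s * x)) by ring.
        rewrite Rabs_Ropp, Rabs_mult, Hs, Rabs_pos_eq; lra. }
      destruct (Hfb _ Hrep) as [_ Heq].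
      replace (T - s * x - T) with (- s * x) in Heq by ring.
      rewrite <- Heq. unfold T.
      replace (z + s * D - s * x) with (z + s * (D - x)) by ring.
      apply HbelowD. lra. }
  assert (HE2 : E (D + rho / 2)).
  { split. lra. intros e He.
    destruct (Rlt_le_dec e D) as [Hlt|Hge].
    - apply HbelowD. lra.
    - assert (Hrep : Rabs ((z + s * e) - T) < rho).
      { unfold T. replace (z + s * e - (z + s * D)) with (s * (e - D)) by ring.
        rewrite Rabs_mult, Hs, Rabs_pos_eq; lra. }
      rewrite (proj2 (Hfb _ Hrep)). apply zero_series_zero. exact Hb0. }
  specialize (HDub _ HE2). lra.
Qed.


Lemma exists_min (a : nat -> R) : (exists n, a n <> 0) ->
  exists m, a m <> 0 /\ forall k, (k < m)%nat -> a k = 0.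
Proof.
  intros [n Hn]. revert Hn. induction n as [n IH] using lt_wf_ind. intros Hn.
  destruct (classic (exists k, (k < n)%nat /\ a k <> 0)) as [[k [Hk Hak]]|Hno].
  - exact (IH k Hk Hak).
  - exists n. split; [exact Hn|]. intros k Hk. apply NNPP. intros Hak. apply Hno. exists k. auto.
Qed.

Lemma cont_ps0 (c : nat -> R) : Rbar_lt 0 (CV_radius c) ->
  forall eps, 0 < eps -> exists d, 0 < d /\ forall w, Rabs w < d -> Rabs (PSeries c w - c 0%nat) < eps.
Proof.
  intros Hcv eps Heps.
  assert (Hc : continuity_pt (PSeries c) 0).
  { apply PSeries_continuity. rewrite Rabs_R0. exact Hcv. }
  destruct (cont_eps _ _ Hc eps Heps) as [d [Hd Hdd]].
  exists d. split; auto. intros w Hw. rewrite <- PSeries_0. apply Hdd. rewrite Rminus_0_r. exact Hw.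
Qed.

Lemma Hbound_gen F D S x P A c : 0 < P -> 0 < c ->
  Rabs (x ^ 2 * F * S) <= P * A -> P * c ^ 2 <= F ^ 2 + x ^ 2 * D ^ 2 ->
  Rabs (x ^ 2 * F * S / (F ^ 2 + x ^ 2 * D ^ 2)) <= A / c ^ 2.
Proof.
  intros HP Hc HN HD.
  set (N := x ^ 2 * F * S) in *. set (Den := F ^ 2 + x ^ 2 * D ^ 2) in *.
  assert (Hc2 : 0 < c ^ 2) by (apply pow_lt; lra).
  assert (HDen : 0 < Den) by nra.
  unfold Rdiv. rewrite Rabs_mult, Rabs_inv, (Rabs_pos_eq Den) by lra.
  apply Rmult_le_reg_r with (r := Den); [lra|].
  rewrite Rmult_assoc, Rinv_l, Rmult_1_r by lra.
  apply Rle_trans with (P * A); [exact HN|].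
  assert (HA : 0 <= A). { pose proof (Rabs_pos N). nra. }
  apply Rle_trans with (A * / c ^ 2 * (P * c ^ 2)).
  - right. field. lra.
  - apply Rmult_le_compat_l; [|exact HD]. apply Rmult_le_pos; [exact HA|]. left; apply Rinv_0_lt_compat; exact Hc2.
Qed.

Lemma pw_ineq (u : R) (k : nat) : 0 <= u <= 1 -> u ^ (S k) * u ^ (k - 1) <= (u ^ k) ^ 2.
Proof.
  intros Hu. destruct k as [|j].
  - simpl. lra.
  - replace (S j - 1)%nat with j by lia. right. simpl. ring.
Qed.

Lemma locH (f : R -> R) (Hana : real_analytic_on pos_half_line f)
  (Hnz : exists x, 0 < x /\ f x <> 0) z (hz : 0 < z) :
  exists e K, 0 < e /\ forall x, Rabs (x - z) < e -> f x <> 0 -> Rabs (Hfun f x) <= K.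
Proof.
  destruct (loc_rep f Hana z hz) as [a [r [Hr [Hf Hcv]]]].
  pose proof (loc_derivs f a r z Hr Hf Hcv) as Hder.
  destruct (exists_min a (nonflat f Hana Hnz z hz a r Hr Hf)) as [m [Ham Hmin]].
  set (a1 := PS_derive a). set (a2 := PS_derive a1).
  assert (Hcv0 : Rbar_lt 0 (CV_radius a)).
  { replace 0 with (Rabs 0) by apply Rabs_R0. apply Hcv. rewrite Rabs_R0. exact Hr. }
  assert (Hcv1 : Rbar_lt 0 (CV_radius a1)) by (unfold a1; rewrite CV_radius_derive; exact Hcv0).
  assert (Hcv2 : Rbar_lt 0 (CV_radius a2)) by (unfold a2; rewrite CV_radius_derive; exact Hcv1).
  destruct m as [|k].
  - (* f z <> 0 *)
    assert (Ha0 : 0 < Rabs (a 0%nat)) by (apply Rabs_pos_lt; exact Ham).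
    destruct (cont_ps0 a Hcv0 (Rabs (a 0%nat) / 2)) as [d0 [Hd0 H0]]; [lra|].
    destruct (cont_ps0 a2 Hcv2 1) as [d2 [Hd2 H2]]; [lra|].
    set (e := Rmin (Rmin r 1) (Rmin d0 d2)).
    assert (He : 0 < e) by (unfold e; repeat apply Rmin_pos; lra).
    assert (Her : e <= r) by (unfold e; pose proof (Rmin_l (Rmin r 1) (Rmin d0 d2)); pose proof (Rmin_l r 1); lra).
    assert (He1 : e <= 1) by (unfold e; pose proof (Rmin_l (Rmin r 1) (Rmin d0 d2)); pose proof (Rmin_r r 1); lra).
    assert (He0 : e <= d0) by (unfold e; pose proof (Rmin_r (Rmin r 1) (Rmin d0 d2)); pose proof (Rmin_l d0 d2); lra).
    assert (He2 : e <= d2) by (unfold e; pose proof (Rmin_r (Rmin r 1) (Rmin d0 d2)); pose proof (Rmin_r d0 d2); lra).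
    exists e, ((z + 1) ^ 2 * (3 * Rabs (a 0%nat) / 2) * (Rabs (a2 0%nat) + 1) / (Rabs (a 0%nat) / 2) ^ 2).
    split; [exact He|]. intros x Hx Hfx.
    assert (Hxr : Rabs (x - z) < r) by lra.
    destruct (Hder x Hxr) as [_ [HS _]].
    destruct (Hf x Hxr) as [Hxpos HF].
    unfold Hfun. rewrite HS.
    apply Hbound_gen with (P := 1); [lra|lra| |].
    + rewrite Rmult_1_l. rewrite !Rabs_mult.
      assert (HFb : Rabs (f x) <= 3 * Rabs (a 0%nat) / 2).
      { rewrite HF. specialize (H0 (x - z) ltac:(lra)).
        pose proof (Rabs_triang_inv (PSeries a (x - z)) (a 0%nat)). lra. }
      assert (HSb : Rabs (PSeries (PS_derive (PS_derive a)) (x - z)) <= Rabs (a2 0%nat) + 1).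
      { specialize (H2 (x - z) ltac:(lra)). fold a1 a2.
        pose proof (Rabs_triang_inv (PSeries a2 (x - z)) (a2 0%nat)). lra. }
      assert (Hx2 : Rabs (x ^ 2) <= (z + 1) ^ 2).
      { rewrite <- RPow_abs, Rabs_pos_eq by lra. apply pow_incr.
        split; [lra|]. apply Rabs_def2 in Hx. lra. }
      apply Rmult_le_compat; [apply Rmult_le_pos; apply Rabs_pos|apply Rabs_pos| |exact HSb].
      apply Rmult_le_compat; [apply Rabs_pos|apply Rabs_pos|exact Hx2|exact HFb].
    + rewrite Rmult_1_l.
      assert (HFl : Rabs (a 0%nat) / 2 <= Rabs (f x)).
      { rewrite HF. specialize (H0 (x - z) ltac:(lra)).
        pose proof (Rabs_triang_inv (a 0%nat) (PSeries a (x - z))).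
        rewrite Rabs_minus_sym in H0. lra. }
      assert (Rabs (a 0%nat) / 2 * (Rabs (a 0%nat) / 2) <= Rabs (f x) * Rabs (f x)).
      { apply Rmult_le_compat; lra. }
      assert (Hsq : Rabs (f x) * Rabs (f x) = f x ^ 2).
      { rewrite <- Rabs_mult. rewrite Rabs_pos_eq. ring. nra. }
      assert (0 <= x ^ 2 * Derive f x ^ 2) by (apply Rmult_le_pos; apply pow2_ge_0).
      lra.
  - (* multiple / simple zero: f = w^(S k) Q0 *)
    set (b0 := PS_decr_n a (S k)). set (b1 := PS_decr_n a1 k). set (b2 := PS_decr_n a2 (k - 1)).
    assert (Hf0 : forall w, PSeries a w = w ^ (S k) * PSeries b0 w).
    { intros w. apply PSeries_decr_n_aux. exact Hmin. }
    assert (Hf1 : forall w, PSeries a1 w = w ^ k * PSeries b1 w).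
    { intros w. apply PSeries_decr_n_aux. intros j Hj. unfold a1, PS_derive.
      rewrite Hmin by lia. ring. }
    assert (Hf2 : forall w, PSeries a2 w = w ^ (k - 1) * PSeries b2 w).
    { intros w. apply PSeries_decr_n_aux. intros j Hj. unfold a2, a1, PS_derive.
      rewrite Hmin by lia. ring. }
    assert (Hb10 : b1 0%nat <> 0).
    { unfold b1, PS_decr_n, a1, PS_derive. replace (k + 0)%nat with k by lia.
      apply Rmult_integral_contrapositive. split; [apply not_0_INR; lia| exact Ham]. }
    assert (Hc0 : Rbar_lt 0 (CV_radius b0)) by (unfold b0; rewrite CV_radius_decr_n; exact Hcv0).
    assert (Hc1 : Rbar_lt 0 (CV_radius b1)) by (unfold b1; rewrite CV_radius_decr_n; exact Hcv1).
    assert (Hc2 : Rbar_lt 0 (CV_radius b2)) by (unfold b2; rewrite CV_radius_decr_n; exact Hcv2).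
    assert (Hb1p : 0 < Rabs (b1 0%nat)) by (apply Rabs_pos_lt; exact Hb10).
    destruct (cont_ps0 b0 Hc0 1) as [d0 [Hd0 H0]]; [lra|].
    destruct (cont_ps0 b1 Hc1 (Rabs (b1 0%nat) / 2)) as [d1 [Hd1 H1]]; [lra|].
    destruct (cont_ps0 b2 Hc2 1) as [d2 [Hd2 H2]]; [lra|].
    set (e := Rmin (Rmin r 1) (Rmin d0 (Rmin d1 d2))).
    assert (He : 0 < e) by (unfold e; repeat apply Rmin_pos; lra).
    assert (Her : e <= r /\ e <= 1 /\ e <= d0 /\ e <= d1 /\ e <= d2).
    { unfold e. pose proof (Rmin_l (Rmin r 1) (Rmin d0 (Rmin d1 d2))).
      pose proof (Rmin_r (Rmin r 1) (Rmin d0 (Rmin d1 d2))).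
      pose proof (Rmin_l r 1). pose proof (Rmin_r r 1).
      pose proof (Rmin_l d0 (Rmin d1 d2)). pose proof (Rmin_r d0 (Rmin d1 d2)).
      pose proof (Rmin_l d1 d2). pose proof (Rmin_r d1 d2). lra. }
    destruct Her as [Her [He1 [He0 [He1' He2]]]].
    exists e, ((Rabs (b0 0%nat) + 1) * (Rabs (b2 0%nat) + 1) / (Rabs (b1 0%nat) / 2) ^ 2).
    split; [exact He|]. intros x Hx Hfx.
    assert (Hxr : Rabs (x - z) < r) by lra.
    destruct (Hder x Hxr) as [HD [HS _]].
    destruct (Hf x Hxr) as [Hxpos HF].
    set (w := x - z) in *.
    assert (Hw1 : Rabs w <= 1) by lra.
    assert (HB0 : Rabs (PSeries b0 w) <= Rabs (b0 0%nat) + 1).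
    { specialize (H0 w ltac:(lra)). pose proof (Rabs_triang_inv (PSeries b0 w) (b0 0%nat)). lra. }
    assert (HB2 : Rabs (PSeries b2 w) <= Rabs (b2 0%nat) + 1).
    { specialize (H2 w ltac:(lra)). pose proof (Rabs_triang_inv (PSeries b2 w) (b2 0%nat)). lra. }
    assert (HB1 : Rabs (b1 0%nat) / 2 <= Rabs (PSeries b1 w)).
    { specialize (H1 w ltac:(lra)). pose proof (Rabs_triang_inv (b1 0%nat) (PSeries b1 w)).
      rewrite Rabs_minus_sym in H1. lra. }
    assert (Hw0 : w <> 0).
    { intros Hw. apply Hfx. rewrite HF, Hf0, Hw. simpl. ring. }
    assert (Hwp : 0 < Rabs w) by (apply Rabs_pos_lt; exact Hw0).
    assert (Hwk : 0 < Rabs w ^ k) by (apply pow_lt; exact Hwp).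
    unfold Hfun. rewrite HS, HD.
    fold a1 a2. rewrite HF, Hf0, Hf1, Hf2.
    apply Hbound_gen with (P := x ^ 2 * (Rabs w ^ k) ^ 2).
    + apply Rmult_lt_0_compat; apply pow_lt; lra.
    + lra.
    + rewrite !Rabs_mult, <- !RPow_abs. rewrite (Rabs_pos_eq x) by lra.
      pose proof (pw_ineq (Rabs w) k ltac:(split; [apply Rabs_pos|exact Hw1])) as Hpw.
      assert (Hx2 : 0 < x ^ 2) by (apply pow_lt; lra).
      assert (Hp1 : 0 <= Rabs w ^ S k) by (apply pow_le; apply Rabs_pos).
      assert (Hp2 : 0 <= Rabs w ^ (k - 1)) by (apply pow_le; apply Rabs_pos).
      pose proof (Rabs_pos (PSeries b0 w)). pose proof (Rabs_pos (PSeries b2 w)).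
      assert (HQ : Rabs (PSeries b0 w) * Rabs (PSeries b2 w) <= (Rabs (b0 0%nat) + 1) * (Rabs (b2 0%nat) + 1)).
      { apply Rmult_le_compat; auto. }
      assert (HW : Rabs w ^ S k * Rabs w ^ (k - 1) * (Rabs (PSeries b0 w) * Rabs (PSeries b2 w))
                   <= (Rabs w ^ k) ^ 2 * ((Rabs (b0 0%nat) + 1) * (Rabs (b2 0%nat) + 1))).
      { apply Rmult_le_compat; auto. apply Rmult_le_pos; auto. apply Rmult_le_pos; auto. }
      apply Rle_trans with (x ^ 2 * (Rabs w ^ S k * Rabs w ^ (k - 1) * (Rabs (PSeries b0 w) * Rabs (PSeries b2 w)))).
      * right. ring.
      * apply Rle_trans with (x ^ 2 * ((Rabs w ^ k) ^ 2 * ((Rabs (b0 0%nat) + 1) * (Rabs (b2 0%nat) + 1)))).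
        -- apply Rmult_le_compat_l; lra.
        -- right. ring.
    + assert (HD2 : (w ^ k * PSeries b1 w) ^ 2 = (Rabs w ^ k * Rabs (PSeries b1 w)) ^ 2).
      { rewrite RPow_abs, <- Rabs_mult, <- pow2_abs. reflexivity. }
      assert (HD3 : (Rabs w ^ k * (Rabs (b1 0%nat) / 2)) ^ 2 <= (Rabs w ^ k * Rabs (PSeries b1 w)) ^ 2).
      { apply pow_incr. split. apply Rmult_le_pos; lra. apply Rmult_le_compat_l; lra. }
      assert (Hx2 : 0 < x ^ 2) by (apply pow_lt; lra).
      assert (0 <= (w ^ S k * PSeries b0 w) ^ 2) by apply pow2_ge_0.
      rewrite HD2.
      apply Rmult_le_compat_l with (r := x ^ 2) in HD3; [|lra].
      replace (x ^ 2 * (Rabs w ^ k) ^ 2 * (Rabs (b1 0%nat) / 2) ^ 2) with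
        (x ^ 2 * (Rabs w ^ k * (Rabs (b1 0%nat) / 2)) ^ 2) by ring.
      lra.
Qed.


Lemma nat_above (K : R) : exists N : nat, K < INR N.
Proof.
  destruct (nfloor_ex (Rabs K) (Rabs_pos K)) as [n Hn].
  exists (S n). rewrite S_INR. pose proof (Rle_abs K). lra.
Qed.

Lemma middleH (f : R -> R) (Hana : real_analytic_on pos_half_line f)
  (Hnz : exists x, 0 < x /\ f x <> 0) (dl M : R) (Hdl : 0 < dl) :
  exists K, forall x, dl <= x <= M -> f x <> 0 -> Rabs (Hfun f x) <= K.
Proof.
  apply NNPP. intros Hno.
  assert (Hn : forall n : nat, exists x, (dl <= x <= M) /\ f x <> 0 /\ INR n < Rabs (Hfun f x)).
  { intros n. apply NNPP. intros Hn. apply Hno. exists (INR n). intros x Hx Hfx.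
    apply Rnot_lt_le. intros Hlt. apply Hn. exists x. auto. }
  set (u := fun n => proj1_sig (constructive_indefinite_description _ (Hn n))).
  assert (Hu : forall n, (dl <= u n <= M) /\ f (u n) <> 0 /\ INR n < Rabs (Hfun f (u n))).
  { intros n. unfold u. destruct (constructive_indefinite_description _ (Hn n)) as [x Hx]. exact Hx. }
  destruct (Bolzano_Weierstrass u (fun c => dl <= c <= M) (compact_P3 dl M)) as [l Hl].
  { intros n. apply Hu. }
  assert (Hlpos : 0 < l).
  { destruct (Hl (disc l (mkposreal dl Hdl)) 0%nat) as [p [_ Hp]].
    { exists (mkposreal dl Hdl). intros y Hy. exact Hy. }
    unfold disc in Hp. simpl in Hp. destruct (Hu p) as [[Hp1 _] _].
    apply Rabs_def2 in Hp. lra. }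
  destruct (locH f Hana Hnz l Hlpos) as [e [K [He HK]]].
  destruct (nat_above K) as [N HN].
  destruct (Hl (disc l (mkposreal e He)) N) as [p [Hp HpV]].
  { exists (mkposreal e He). intros y Hy. exact Hy. }
  unfold disc in HpV. simpl in HpV.
  destruct (Hu p) as [_ [Hfp Hlt]].
  specialize (HK (u p) HpV Hfp).
  apply le_INR in Hp. lra.
Qed.

Lemma globH (f : R -> R) (Hana : real_analytic_on pos_half_line f)
  (Hnz : exists x, 0 < x /\ f x <> 0)
  (H2 : exists C : R, 0 < C /\
      (forall eps, 0 < eps -> exists delta, 0 < delta /\
         forall x, 0 < x < delta ->
           f x ^ 2 + x ^ 2 * (Derive f x) ^ 2 <> 0 -> Rabs (Hfun f x) <= C + eps) /\
      (forall eps, 0 < eps -> exists M, 0 < M /\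
         forall x, M < x ->
           f x ^ 2 + x ^ 2 * (Derive f x) ^ 2 <> 0 -> Rabs (Hfun f x) <= C + eps)) :
  exists K, 0 <= K /\ forall x, 0 < x -> f x <> 0 -> Rabs (Hfun f x) <= K.
Proof.
  destruct H2 as [C [HC [H0 Hinf]]].
  destruct (H0 1 Rlt_0_1) as [dl [Hdl Hdl']].
  destruct (Hinf 1 Rlt_0_1) as [M [HM HM']].
  destruct (middleH f Hana Hnz dl M Hdl) as [K1 HK1].
  exists (Rmax (C + 1) K1). split.
  { apply Rle_trans with (C + 1). lra. apply Rmax_l. }
  intros x Hx Hfx.
  assert (Hden : f x ^ 2 + x ^ 2 * Derive f x ^ 2 <> 0).
  { assert (0 < f x ^ 2) by (apply pow_lt_0_compat_2 || (simpl; nra)).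
    assert (0 <= x ^ 2 * Derive f x ^ 2) by (apply Rmult_le_pos; apply pow2_ge_0). lra. }
  destruct (Rlt_le_dec x dl) as [Hlt|Hge].
  - apply Rle_trans with (C + 1). apply Hdl'; auto. apply Rmax_l.
  - destruct (Rlt_le_dec M x) as [HMx|HxM].
    + apply Rle_trans with (C + 1). apply HM'; auto. apply Rmax_l.
    + apply Rle_trans with K1. apply HK1; auto. apply Rmax_r.
Qed.


Section Core.
Variables (g g1 g2 : R -> R) (L : R).
Hypothesis HL : 0 < L.
Hypothesis Hd : forall t, is_derive g t (g1 t).
Hypothesis Hd1 : forall t, is_derive g1 t (g2 t).
Hypothesis Hc : forall t, g t <> 0 ->
  Rabs (g2 t * g t - g1 t ^ 2) <= L * (Rabs (g t) + Rabs (g1 t)) ^ 2.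

Let hh (r : R) := g1 r / g r.
Let phi (r : R) := / sqrt (1 + (g1 r / g r) ^ 2).
Let Dphi (r : R) := - ((g1 r / g r) * ((g2 r * g r - g1 r ^ 2) / g r ^ 2)
    / sqrt (1 + (g1 r / g r) ^ 2)) / (sqrt (1 + (g1 r / g r) ^ 2) * sqrt (1 + (g1 r / g r) ^ 2)).

Lemma sq_facts (H : R) : 1 <= sqrt (1 + H ^ 2) /\ sqrt (1 + H ^ 2) * sqrt (1 + H ^ 2) = 1 + H ^ 2
  /\ Rabs H <= sqrt (1 + H ^ 2) /\ sqrt (1 + H ^ 2) <= 1 + Rabs H.
Proof.
  assert (H0 : 0 <= 1 + H ^ 2) by (pose proof (pow2_ge_0 H); lra).
  assert (Hs : sqrt (1 + H ^ 2) * sqrt (1 + H ^ 2) = 1 + H ^ 2) by (apply sqrt_sqrt; lra).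
  assert (Hp : 0 <= sqrt (1 + H ^ 2)) by apply sqrt_pos.
  assert (HA : Rabs H * Rabs H = H ^ 2) by (rewrite <- Rabs_mult, Rabs_pos_eq; [ring|nra]).
  pose proof (Rabs_pos H).
  split; [|split; [exact Hs|split]].
  - nra.
  - nra.
  - nra.
Qed.

Lemma phi_deriv (v : R) : g v <> 0 -> is_derive phi v (Dphi v).
Proof.
  intros Hg. unfold phi, Dphi.
  pose proof (sq_facts (g1 v / g v)) as [S1 [S2 _]]. pose proof (pow2_ge_0 (g1 v / g v)).
  assert (Hx : Derive (fun x => g x) v = g1 v) by (apply is_derive_unique; apply Hd).
  assert (Hx1 : Derive (fun x => g1 x) v = g2 v) by (apply is_derive_unique; apply Hd1).
  auto_derive.
  - repeat split.
    + eexists; apply Hd1.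
    + eexists; apply Hd.
    + exact Hg.
    + replace (1 + g1 v * / g v * (g1 v * / g v * 1)) with (1 + (g1 v / g v) ^ 2) by (unfold Rdiv; ring). lra.
    + replace (1 + g1 v * / g v * (g1 v * / g v * 1)) with (1 + (g1 v / g v) ^ 2) by (unfold Rdiv; ring). lra.
  - rewrite Hx, Hx1.
    replace (1 + g1 v * / g v * (g1 v * / g v * 1)) with (1 + (g1 v / g v) ^ 2) by (unfold Rdiv; ring).
    field. split; [exact Hg|lra].
Qed.

Lemma Dphi_bound (v : R) : g v <> 0 -> Rabs (Dphi v) <= 2 * L.
Proof.
  intros Hg. unfold Dphi.
  set (H := g1 v / g v). set (Hp := (g2 v * g v - g1 v ^ 2) / g v ^ 2).
  pose proof (sq_facts H) as [S1 [S2 [S3 S4]]].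
  set (S := sqrt (1 + H ^ 2)) in *.
  assert (Hgp : 0 < Rabs (g v)) by (apply Rabs_pos_lt; exact Hg).
  assert (HH : Rabs (g1 v) = Rabs (g v) * Rabs H).
  { unfold H. rewrite Rabs_div by exact Hg. field. lra. }
  assert (HHp : Rabs Hp <= L * (1 + Rabs H) ^ 2).
  { unfold Hp. rewrite Rabs_div by (apply pow_nonzero; exact Hg).
    rewrite <- RPow_abs.
    specialize (Hc v Hg). rewrite HH in Hc.
    replace (L * (Rabs (g v) + Rabs (g v) * Rabs H) ^ 2) with
      ((L * (1 + Rabs H) ^ 2) * Rabs (g v) ^ 2) in Hc by ring.
    apply Rmult_le_reg_r with (r := Rabs (g v) ^ 2). apply pow_lt; lra.
    unfold Rdiv. rewrite Rmult_assoc, Rinv_l, Rmult_1_r. exact Hc.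
    apply pow_nonzero; lra. }
  assert (E1 : - (H * Hp / S) / (S * S) = - (H * Hp) / (S * (S * S))) by (field; lra).
  rewrite E1. unfold Rdiv. rewrite Rabs_mult, Rabs_Ropp, Rabs_mult, Rabs_inv.
  rewrite (Rabs_pos_eq (S * (S * S))) by (apply Rmult_le_pos; [lra|]; apply Rmult_le_pos; lra).
  assert (HS3 : 0 < S * (S * S)) by (apply Rmult_lt_0_compat; [lra|]; apply Rmult_lt_0_compat; lra).
  apply Rmult_le_reg_r with (r := S * (S * S)); [exact HS3|].
  rewrite Rmult_assoc, Rinv_l, Rmult_1_r by lra.
  pose proof (Rabs_pos H). pose proof (Rabs_pos Hp).
  assert (Hq : (1 + Rabs H) ^ 2 <= 2 * (S * S)).
  { rewrite S2. assert (HA : Rabs H * Rabs H = H ^ 2).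
    { rewrite <- Rabs_mult, Rabs_pos_eq. ring. nra. }
    pose proof (pow2_ge_0 (1 - Rabs H)). simpl in *. nra. }
  apply Rle_trans with (S * (L * (2 * (S * S)))).
  - apply Rmult_le_compat; try lra. apply Rle_trans with (L * (1 + Rabs H) ^ 2); [exact HHp|].
    apply Rmult_le_compat_l; lra.
  - right. ring.
Qed.

Lemma phi_lip (t w : R) : t <= w -> (forall v, t <= v <= w -> g v <> 0) ->
  phi t - 2 * L * (w - t) <= phi w.
Proof.
  intros Htw Hnz.
  destruct (MVT_gen phi t w Dphi) as [c [Hc1 Hc2]].
  - intros x Hx. rewrite Rmin_left, Rmax_right in Hx by lra. apply phi_deriv. apply Hnz. lra.
  - intros x Hx. rewrite Rmin_left, Rmax_right in Hx by lra.
    apply continuity_pt_filterlim.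
    apply (@ex_derive_continuous R_AbsRing R_NormedModule).
    eexists. apply phi_deriv. apply Hnz. lra.
  - rewrite Rmin_left, Rmax_right in Hc1 by lra.
    pose proof (Dphi_bound c (Hnz c Hc1)) as Hb.
    assert (Dphi c * (w - t) >= - (2 * L) * (w - t)).
    { apply Rle_ge. apply Rmult_le_compat_r; [lra|]. pose proof (Rle_abs (- Dphi c)) as Hq; rewrite Rabs_Ropp in Hq; lra. }
    lra.
Qed.

Lemma h_bound (t w : R) : t <= w -> (forall v, t <= v <= w -> g v <> 0) ->
  (w - t) * (4 * L * (1 + Rabs (g1 t / g t))) <= 1 ->
  Rabs (g1 w / g w) <= 2 * (1 + Rabs (g1 t / g t)).
Proof.
  intros Htw Hnz Hrad.
  pose proof (phi_lip t w Htw Hnz) as Hl. unfold phi in Hl.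
  pose proof (sq_facts (g1 t / g t)) as [T1 [_ [_ T4]]].
  pose proof (sq_facts (g1 w / g w)) as [W1 [_ [W3 _]]].
  set (mu := 1 + Rabs (g1 t / g t)) in *.
  set (St := sqrt (1 + (g1 t / g t) ^ 2)) in *.
  set (Sw := sqrt (1 + (g1 w / g w) ^ 2)) in *.
  assert (Hmu : 1 <= mu) by (unfold mu; pose proof (Rabs_pos (g1 t / g t)); lra).
  assert (Ht : / mu <= / St) by (apply Rinv_le_contravar; lra).
  assert (Hr2 : 2 * L * (w - t) <= / (2 * mu)).
  { apply Rmult_le_reg_r with (r := 2 * mu); [lra|].
    rewrite Rinv_l by lra. nra. }
  assert (Hw : / (2 * mu) <= / Sw).
  { assert (/ (2 * mu) = / mu - / (2 * mu)) by (field; lra). lra. }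
  assert (Sw <= 2 * mu).
  { destruct (Rle_lt_dec Sw (2 * mu)) as [|Hlt]; [assumption|]. exfalso.
    assert (/ Sw < / (2 * mu)) by (apply Rinv_lt_contravar; nra). lra. }
  lra.
Qed.

Lemma lng_bound (t w B : R) : t <= w -> (forall v, t <= v <= w -> g v <> 0 /\ Rabs (g1 v / g v) <= B) ->
  ln (g t ^ 2) - 2 * B * (w - t) <= ln (g w ^ 2).
Proof.
  intros Htw Hv.
  set (psi := fun r => ln (g r ^ 2)).
  set (dpsi := fun r => 2 * (g1 r / g r)).
  assert (Hder : forall v, g v <> 0 -> is_derive psi v (dpsi v)).
  { intros v Hg. unfold psi, dpsi.
    assert (Hx : Derive (fun x => g x) v = g1 v) by (apply is_derive_unique; apply Hd).
    assert (Hpos : 0 < g v ^ 2) by (apply pow_lt_0_compat_2 || (simpl; nra)).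
    auto_derive.
    - split; [eexists; apply Hd|]. split; [|exact I]. simpl in Hpos. lra.
    - rewrite Hx. field. exact Hg. }
  destruct (MVT_gen psi t w dpsi) as [c [Hc1 Hc2]].
  - intros x Hx. rewrite Rmin_left, Rmax_right in Hx by lra. apply Hder. apply Hv. lra.
  - intros x Hx. rewrite Rmin_left, Rmax_right in Hx by lra.
    apply continuity_pt_filterlim.
    apply (@ex_derive_continuous R_AbsRing R_NormedModule).
    eexists. apply Hder. apply Hv. lra.
  - rewrite Rmin_left, Rmax_right in Hc1 by lra.
    destruct (Hv c Hc1) as [_ Hb]. unfold psi, dpsi in *.
    assert (2 * (g1 c / g c) * (w - t) >= - (2 * B) * (w - t)).
    { apply Rle_ge. apply Rmult_le_compat_r; [lra|]. pose proof (Rle_abs (- (g1 c / g c))) as Hq; rewrite Rabs_Ropp in Hq; lra. }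
    lra.
Qed.

End Core.


Lemma core (g g1 g2 : R -> R) (L : R) (HL : 0 < L)
  (Hd : forall t, is_derive g t (g1 t)) (Hd1 : forall t, is_derive g1 t (g2 t))
  (Hc : forall t, g t <> 0 -> Rabs (g2 t * g t - g1 t ^ 2) <= L * (Rabs (g t) + Rabs (g1 t)) ^ 2)
  (t s : R) : g t <> 0 -> t <= s -> (s - t) * (4 * L * (1 + Rabs (g1 t / g t))) <= 1 ->
  g s <> 0 /\ Rabs (g1 s / g s) <= 2 * (1 + Rabs (g1 t / g t)).
Proof.
  intros Hgt Hts Hrad.
  set (mu := 1 + Rabs (g1 t / g t)) in *.
  assert (Hmu : 1 <= mu) by (unfold mu; pose proof (Rabs_pos (g1 t / g t)); lra).
  set (E := fun w => t <= w <= s /\ forall v, t <= v <= w -> g v <> 0).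
  destruct (completeness E) as [T [HTub HTl]].
  { exists s. intros w Hw. apply Hw. }
  { exists t. split; [lra|]. intros v Hv. replace v with t by lra. exact Hgt. }
  assert (HtT : t <= T).
  { apply HTub. split; [lra|]. intros v Hv. replace v with t by lra. exact Hgt. }
  assert (HTs : T <= s) by (apply HTl; intros w Hw; apply Hw).
  assert (Below : forall v, t <= v < T -> g v <> 0).
  { intros v Hv Hgv.
    assert (Hub : is_upper_bound E v).
    { intros w [Hw1 Hw2]. destruct (Rle_lt_dec w v) as [|Hlt]; [assumption|].
      exfalso. apply (Hw2 v); [lra|exact Hgv]. }
    specialize (HTl v Hub). lra. }
  assert (Hradv : forall v, t <= v <= s -> (v - t) * (4 * L * mu) <= 1).
  { intros v Hv. apply Rle_trans with ((s - t) * (4 * L * mu)); [|exact Hrad].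
    apply Rmult_le_compat_r; [|lra]. apply Rmult_le_pos; lra. }
  assert (Hgood : forall v, t <= v < T -> forall u, t <= u <= v -> g u <> 0 /\ Rabs (g1 u / g u) <= 2 * mu).
  { intros v Hv u Hu. split. apply Below; lra.
    apply (h_bound g g1 g2 L HL Hd Hd1 Hc t u). lra.
    intros y Hy. apply Below. lra. apply Hradv. lra. }
  set (lam := ln (g t ^ 2) - 2 * (2 * mu) * (s - t)).
  assert (Hlow : forall v, t <= v < T -> exp lam <= g v ^ 2).
  { intros v Hv.
    pose proof (lng_bound g g1 Hd t v (2 * mu) ltac:(lra) (Hgood v Hv)) as Hl.
    assert (Hpos : 0 < g v ^ 2).
    { pose proof (Below v Hv). apply pow_lt_0_compat_2 || (simpl; nra). }
    rewrite <- (exp_ln (g v ^ 2)) by exact Hpos.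
    destruct (Rle_lt_or_eq_dec lam (ln (g v ^ 2))) as [Hlt|Heq].
    - unfold lam. assert (2 * (2 * mu) * (v - t) <= 2 * (2 * mu) * (s - t)).
      { apply Rmult_le_compat_l; lra. } lra.
    - left. apply exp_increasing. exact Hlt.
    - rewrite Heq. lra. }
  assert (HgT : g T <> 0).
  { destruct (Req_dec T t) as [->|HTt]; [exact Hgt|].
    intros HgT0.
    assert (Hel : 0 < exp lam) by apply exp_pos.
    destruct (ex_derive_cont_eps g T (ex_intro _ _ (Hd T)) (Rmin 1 (exp lam))) as [d [Hd0 Hdd]].
    { apply Rmin_pos; lra. }
    set (v := Rmax t (T - d / 2)).
    assert (Hv1 : t <= v) by apply Rmax_l.
    assert (Hv2 : T - d / 2 <= v) by apply Rmax_r.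
    assert (Hv3 : v < T).
    { unfold v. apply Rmax_lub_lt; lra. }
    assert (Hvd : Rabs (v - T) < d) by (apply Rabs_def1; lra).
    specialize (Hdd v Hvd). rewrite HgT0, Rminus_0_r in Hdd.
    specialize (Hlow v (conj Hv1 Hv3)).
    pose proof (Rmin_l 1 (exp lam)). pose proof (Rmin_r 1 (exp lam)).
    assert (Habs : g v ^ 2 = Rabs (g v) * Rabs (g v)).
    { rewrite <- Rabs_mult, Rabs_pos_eq. ring. nra. }
    pose proof (Rabs_pos (g v)). nra. }
  assert (HTeq : T = s).
  { destruct (Req_dec T s) as [|HTs']; [assumption|]. exfalso.
    destruct (ex_derive_cont_eps g T (ex_intro _ _ (Hd T)) (Rabs (g T))) as [d [Hd0 Hdd]].
    { apply Rabs_pos_lt. exact HgT. }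
    set (w := Rmin s (T + d / 2)).
    assert (Hw1 : w <= s) by apply Rmin_l.
    assert (Hw2 : w <= T + d / 2) by apply Rmin_r.
    assert (Hw3 : T < w) by (unfold w; apply Rmin_glb_lt; lra).
    assert (HEw : E w).
    { split; [lra|]. intros v Hv.
      destruct (Rlt_le_dec v T) as [Hlt|Hge]. apply Below; lra.
      destruct (Req_dec v T) as [->|Hne]; [exact HgT|].
      intros Hgv. assert (Hvd : Rabs (v - T) < d) by (apply Rabs_def1; lra).
      specialize (Hdd v Hvd). rewrite Hgv, Rminus_0_l, Rabs_Ropp in Hdd. lra. }
    specialize (HTub w HEw). lra. }
  subst T.
  assert (Hnz : forall v, t <= v <= s -> g v <> 0).
  { intros v Hv. destruct (Req_dec v s) as [->|Hne]; [exact HgT|]. apply Below. lra. }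
  split; [exact HgT|].
  apply (h_bound g g1 g2 L HL Hd Hd1 Hc t s); auto.
Qed.


Lemma core_sym (g g1 g2 : R -> R) (L : R) (HL : 0 < L)
  (Hd : forall t, is_derive g t (g1 t)) (Hd1 : forall t, is_derive g1 t (g2 t))
  (Hc : forall t, g t <> 0 -> Rabs (g2 t * g t - g1 t ^ 2) <= L * (Rabs (g t) + Rabs (g1 t)) ^ 2)
  (t s : R) : g t <> 0 -> Rabs (s - t) * (4 * L * (1 + Rabs (g1 t / g t))) <= 1 ->
  g s <> 0 /\ Rabs (g1 s / g s) <= 2 * (1 + Rabs (g1 t / g t)).
Proof.
  intros Hgt Hrad.
  destruct (Rle_lt_dec t s) as [Hts|Hst].
  - rewrite Rabs_pos_eq in Hrad by lra. apply (core g g1 g2 L); auto.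
  - set (gr := fun u => g (- u)). set (gr1 := fun u => - g1 (- u)). set (gr2 := fun u => g2 (- u)).
    assert (Hopp : forall u, is_derive (fun v : R => - v) u (-1)).
    { intros u. auto_derive; auto. }
    assert (Hdr : forall u, is_derive gr u (gr1 u)).
    { intros u. unfold gr, gr1.
      pose proof (is_derive_comp g (fun v => - v) u _ _ (Hd (- u)) (Hopp u)) as Hx.
      replace (- g1 (- u)) with (scal (-1) (g1 (- u))). exact Hx.
      unfold scal; simpl; unfold mult; simpl. ring. }
    assert (Hdr1 : forall u, is_derive gr1 u (gr2 u)).
    { intros u. unfold gr1, gr2.
      pose proof (is_derive_comp g1 (fun v => - v) u _ _ (Hd1 (- u)) (Hopp u)) as Hx.
      pose proof (is_derive_opp _ _ _ Hx) as Hy. simpl in Hy.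
      replace (g2 (- u)) with (opp (scal (-1) (g2 (- u)))). exact Hy.
      unfold opp, scal; simpl; unfold mult, opp; simpl. ring. }
    assert (Hcr : forall u, gr u <> 0 -> Rabs (gr2 u * gr u - gr1 u ^ 2) <= L * (Rabs (gr u) + Rabs (gr1 u)) ^ 2).
    { intros u Hu. unfold gr, gr1, gr2 in *. rewrite Rabs_Ropp.
      replace ((- g1 (- u)) ^ 2) with (g1 (- u) ^ 2) by ring. apply Hc. exact Hu. }
    assert (Hgrt : gr (- t) <> 0) by (unfold gr; rewrite Ropp_involutive; exact Hgt).
    assert (Hh : gr1 (- t) / gr (- t) = - (g1 t / g t)).
    { unfold gr, gr1. rewrite !Ropp_involutive. field. exact Hgt. }
    assert (Hrad' : (- s - - t) * (4 * L * (1 + Rabs (gr1 (- t) / gr (- t)))) <= 1).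
    { rewrite Hh, Rabs_Ropp. rewrite Rabs_left in Hrad by lra.
      replace (- s - - t) with (- (s - t)) by ring. exact Hrad. }
    destruct (core gr gr1 gr2 L HL Hdr Hdr1 Hcr (- t) (- s) Hgrt ltac:(lra) Hrad') as [H1 H2].
    rewrite Hh, Rabs_Ropp in H2.
    unfold gr, gr1 in H1, H2. rewrite Ropp_involutive in H1, H2.
    split; [exact H1|].
    replace (- g1 s / g s) with (- (g1 s / g s)) in H2 by (field; exact H1).
    rewrite Rabs_Ropp in H2. exact H2.
Qed.


Lemma derivs_pos (f : R -> R) (Hana : real_analytic_on pos_half_line f) x : 0 < x ->
  is_derive f x (Derive f x) /\ is_derive (Derive f) x (Derive_n f 2 x).
Proof.
  intros Hx. destruct (loc_rep f Hana x Hx) as [a [r [Hr [Hf Hcv]]]].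
  destruct (loc_derivs f a r x Hr Hf Hcv x) as [_ [_ [H1 H2]]].
  rewrite Rminus_eq_0, Rabs_R0; exact Hr. auto.
Qed.

Theorem proposition4 (f : R -> R)
  (Hana : real_analytic_on pos_half_line f)
  (Hnz : exists x, 0 < x /\ f x <> 0)
  (H1 : forall xs : nat -> R,
      (forall j, 0 < xs j) ->
      (is_lim_seq xs (Finite 0) \/ is_lim_seq xs p_infty) ->
      Rbar_seq_cv (fun j => reldist_set (xs j) (fun s => 0 < s /\ f s = 0)) (Finite 0) ->
      Rbar_seq_cv (fun j => kappa f (xs j)) p_infty)
  (H2 : exists C : R, 0 < C /\
      (* limsup_{x -> 0+} |H(f,x)| <= C *)
      (forall eps, 0 < eps -> exists delta, 0 < delta /\
         forall x, 0 < x < delta ->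
           f x ^ 2 + x ^ 2 * (Derive f x) ^ 2 <> 0 -> Rabs (Hfun f x) <= C + eps) /\
      (* limsup_{x -> +oo} |H(f,x)| <= C *)
      (forall eps, 0 < eps -> exists M, 0 < M /\
         forall x, M < x ->
           f x ^ 2 + x ^ 2 * (Derive f x) ^ 2 <> 0 -> Rabs (Hfun f x) <= C + eps)) :
  amenable pos_half_line f.
Proof.
  destruct (globH f Hana Hnz H2) as [K [HK0 HK]].
  set (g := fun t => f (exp t)).
  set (g1 := fun t => exp t * Derive f (exp t)).
  set (g2 := fun t => exp t * Derive f (exp t) + exp t ^ 2 * Derive_n f 2 (exp t)).
  set (L := K + 2).
  assert (HL : 0 < L) by (unfold L; lra).
  assert (Hd : forall t, is_derive g t (g1 t)).
  { intros t. destruct (derivs_pos f Hana (exp t) (exp_pos t)) as [Hf _].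
    pose proof (is_derive_comp f exp t _ _ Hf (is_derive_exp t)) as Hx.
    unfold g, g1. replace (exp t * Derive f (exp t)) with (scal (exp t) (Derive f (exp t))). exact Hx.
    reflexivity. }
  assert (Hd1 : forall t, is_derive g1 t (g2 t)).
  { intros t. destruct (derivs_pos f Hana (exp t) (exp_pos t)) as [_ Hf].
    pose proof (is_derive_comp (Derive f) exp t _ _ Hf (is_derive_exp t)) as Hx.
    pose proof (is_derive_mult exp (fun u => Derive f (exp u)) t _ _ (is_derive_exp t) Hx) as Hy.
    unfold g1, g2. 
    replace (exp t * Derive f (exp t) + exp t ^ 2 * Derive_n f 2 (exp t)) with
      (plus (mult (exp t) (Derive f (exp t))) (mult (exp t) (scal (exp t) (Derive_n f 2 (exp t))))).
    apply Hy. intros; apply Rmult_comm.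
    unfold plus, mult, scal; simpl; unfold mult; simpl. ring. }
  assert (Hc : forall t, g t <> 0 -> Rabs (g2 t * g t - g1 t ^ 2) <= L * (Rabs (g t) + Rabs (g1 t)) ^ 2).
  { intros t Hgt. unfold g, g1, g2 in *.
    set (x := exp t) in *. assert (Hx : 0 < x) by apply exp_pos.
    set (F := f x) in *. set (Dv := Derive f x). set (S := Derive_n f 2 x).
    specialize (HK x Hx Hgt). unfold Hfun in HK. fold F Dv S in HK.
    assert (HF2 : 0 < F ^ 2) by (simpl; nra).
    assert (Hden : 0 < F ^ 2 + x ^ 2 * Dv ^ 2) by (pose proof (pow2_ge_0 (x * Dv)); simpl in *; nra).
    assert (HN : Rabs (x ^ 2 * F * S) <= K * (F ^ 2 + x ^ 2 * Dv ^ 2)).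
    { unfold Rdiv in HK. rewrite Rabs_mult, Rabs_inv, (Rabs_pos_eq (F ^ 2 + x ^ 2 * Dv ^ 2)) in HK by lra.
      apply Rmult_le_compat_r with (r := F ^ 2 + x ^ 2 * Dv ^ 2) in HK; [|lra].
      rewrite Rmult_assoc, Rinv_l, Rmult_1_r in HK by lra. exact HK. }
    set (a := Rabs F). set (b := Rabs (x * Dv)).
    assert (Ha : 0 <= a) by apply Rabs_pos. assert (Hb : 0 <= b) by apply Rabs_pos.
    assert (Ea : F ^ 2 = a * a) by (unfold a; rewrite <- Rabs_mult, Rabs_pos_eq; [ring|nra]).
    assert (Eb : x ^ 2 * Dv ^ 2 = b * b) by (unfold b; rewrite <- Rabs_mult, Rabs_pos_eq; [ring|nra]).
    replace ((x * Dv + x ^ 2 * S) * F - (x * Dv) ^ 2) with ((x * Dv) * F + x ^ 2 * F * S - x ^ 2 * Dv ^ 2) by ring.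
    apply Rle_trans with (Rabs ((x * Dv) * F) + Rabs (x ^ 2 * F * S) + Rabs (x ^ 2 * Dv ^ 2)).
    { unfold Rminus. eapply Rle_trans; [apply Rabs_triang|]. rewrite Rabs_Ropp.
      apply Rplus_le_compat_r. apply Rabs_triang. }
    rewrite Rabs_mult. fold b a. rewrite Eb. rewrite (Rabs_pos_eq (b * b)) by nra.
    fold a b in HN |- *. rewrite Ea, Eb in HN.
    unfold L. pose proof (Rmult_le_pos K (a * b) HK0 (Rmult_le_pos a b Ha Hb)). nra. }
  set (Cc := 4 * L + 3).
  exists Cc. split; [unfold Cc; lra|].
  intros x Hx Hfin.
  assert (Hx0 : x <> 0) by (unfold pos_half_line in Hx; lra).
  unfold pos_half_line in Hx.
  assert (Hfx : f x <> 0).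
  { intros Hf0. unfold kappa in Hfin. destruct (Req_EM_T x 0); [lra|].
    destruct (Req_EM_T (f x) 0); [|contradiction]. unfold is_finite in Hfin. simpl in Hfin. discriminate. }
  assert (Hmux : real (mu f x) = 1 + Rabs x * Rabs (Derive f x) / Rabs (f x)).
  { unfold mu, kappa. destruct (Req_EM_T x 0); [lra|]. destruct (Req_EM_T (f x) 0); [contradiction|].
    reflexivity. }
  rewrite Hmux.
  set (mux := 1 + Rabs x * Rabs (Derive f x) / Rabs (f x)).
  assert (Hmux1 : 1 <= mux).
  { unfold mux. assert (0 <= Rabs x * Rabs (Derive f x) / Rabs (f x)).
    { unfold Rdiv. apply Rmult_le_pos. apply Rmult_le_pos; apply Rabs_pos.
      left; apply Rinv_0_lt_compat; apply Rabs_pos_lt; exact Hfx. } lra. }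
  assert (Hypos : forall y, Rbar_lt (reldist y x) (Finite (/ (Cc * mux))) -> 0 < y /\ Rabs (ln y - ln x) < / (Cc * mux)).
  { intros y Hy. unfold reldist in Hy.
    destruct (Req_EM_T y 0) as [Hy0|Hy0].
    - destruct (Req_EM_T x 0); [lra|]. simpl in Hy. contradiction.
    - destruct (Rlt_dec 0 (y * x)) as [Hyx|Hyx]; [|simpl in Hy; contradiction].
      assert (Hyp : 0 < y) by nra. split; [exact Hyp|].
      simpl in Hy. rewrite ln_div in Hy by lra. rewrite Rabs_minus_sym. exact Hy. }
  split.
  - intros y Hy. apply Hypos. exact Hy.
  - intros y Hy. destruct (Hypos y Hy) as [Hyp Hyd].
    set (t := ln x). set (s := ln y).
    assert (Hext : exp t = x) by (unfold t; apply exp_ln; lra).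
    assert (Heys : exp s = y) by (unfold s; apply exp_ln; lra).
    assert (Hgt : g t <> 0) by (unfold g; rewrite Hext; exact Hfx).
    assert (Hht : 1 + Rabs (g1 t / g t) = mux).
    { unfold g, g1, mux. rewrite Hext. rewrite Rabs_div by exact Hfx. rewrite Rabs_mult. reflexivity. }
    assert (Hrad : Rabs (s - t) * (4 * L * (1 + Rabs (g1 t / g t))) <= 1).
    { rewrite Hht. fold s t in Hyd.
      assert (HC : 0 < Cc * mux) by (unfold Cc; nra).
      assert (Rabs (s - t) * (Cc * mux) < 1).
      { apply Rmult_lt_compat_r with (r := Cc * mux) in Hyd; [|exact HC].
        rewrite Rinv_l in Hyd by lra. exact Hyd. }
      assert (Rabs (s - t) * (4 * L * mux) <= Rabs (s - t) * (Cc * mux)).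
      { apply Rmult_le_compat_l; [apply Rabs_pos|]. unfold Cc. nra. }
      lra. }
    destruct (core_sym g g1 g2 L HL Hd Hd1 Hc t s Hgt Hrad) as [Hgs Hhs].
    rewrite Hht in Hhs.
    unfold g, g1 in Hgs, Hhs. rewrite Heys in Hgs, Hhs.
    unfold mu, kappa. destruct (Req_EM_T y 0); [lra|]. destruct (Req_EM_T (f y) 0); [contradiction|].
    simpl. rewrite Rabs_div, Rabs_mult in Hhs by exact Hgs.
    unfold Cc. nra.
Qed.
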